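(* Let $N\ge 3$ and let $M_N$ be $K_N$ with the edge $\{u,v\}$ removed. Consider the Moran process with mutants on $M_N$ and residents on $K_N$. For a configuration with $a$ mutants among the $N-2$ vertices other than $u,v$ and $b$ mutants among $\{u,v\}$ ($0\le a\le N-2$, $0\le b\le 2$), the probability of reaching the all-mutant state equals \[ \varphi(a,b)=\frac{(a+b)(N-2)+\tfrac12 b(b-1)}{(N-1)^2}. \] Conversely, with mutants on $K_N$ and residents on $M_N$, the probability of reaching the all-mutant state from such a configuration equals \[ \frac{(a+b)(N-2)+\tfrac12 b(3-b)}{(N-1)^2}. \]
   Context: Moran Birth-death process on two graphs (neutral case): $G^A$ (mutant graph) and $G^B$ (resident graph) are connected undirected simple graphs on the same vertex set $\{1,\dots,N\}$. Every vertex is occupied by one individual, of type $A$ (mutant) or type $B$ (resident). In each step, one individual is chosen uniformly at random to reproduce; its offspring (same type) replaces the individual at a uniformly random neighbor of the parent's vertex, neighbors taken in $G^A$ if the parent is type $A$ and in $G^B$ if type $B$. The all-$A$ and all-$B$ states are absorbing. $K_N$ denotes the complete graph. *)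

(* Defs.v *)
From HB Require Import structures.
From mathcomp Require Import all_boot all_order all_algebra.
From mathcomp Require Import all_classical all_reals topology normedtype sequences.
Set Implicit Arguments. Unset Strict Implicit. Unset Printing Implicit Defensive.
Import Order.TTheory GRing.Theory Num.Theory.
Local Open Scope ring_scope.

(* A configuration: x k = true iff vertex k holds a mutant (type A). *)
Definition config (N : nat) := {ffun 'I_N -> bool}.

Definition KN (N : nat) : rel 'I_N := fun i j => i != j.
Definition MN (N : nat) (u v : 'I_N) : rel 'I_N :=
  fun i j => (i != j) && ~~ (((i == u) && (j == v)) || ((i == v) && (j == u))).

Definition deg (N : nat) (e : rel 'I_N) (i : 'I_N) : nat := #|[pred j | e i j]|.

(* Offspring of the parent at i (type b) replaces the individual at j. *)
Definition upd (N : nat) (x : config N) (j : 'I_N) (b : bool) : config N :=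
  [ffun k => if k == j then b else x k].

Definition allA (N : nat) (x : config N) : bool := [forall k, x k].

(* Probability of one Birth-death step i -> j from configuration x, where
   eA is the mutant graph and eB the resident graph. *)
Definition stepw (R : realType) (N : nat) (eA eB : rel 'I_N) (x : config N)
  (i j : 'I_N) : R :=
  let e := if x i then eA else eB in
  if e i j then (N%:R * (deg e i)%:R)^-1 else 0.

(* hitA t x = probability that, starting from x, the process has reached the
   all-mutant state within t steps. *)
Fixpoint hitA (R : realType) (N : nat) (eA eB : rel 'I_N) (t : nat)
  (x : config N) : R :=
  if allA x then 1 else
  match t with
  | 0 => 0
  | t'.+1 => \sum_(i : 'I_N) \sum_(j : 'I_N)
               stepw R eA eB x i j * hitA R eA eB t' (upd x j (x i))
  end.

Definition cnt_out (N : nat) (u v : 'I_N) (x : config N) : nat :=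
  #|[pred k | x k && (k != u) && (k != v)]|.
Definition cnt_in (N : nat) (u v : 'I_N) (x : config N) : nat :=
  #|[pred k | x k && ((k == u) || (k == v))]|.

(* Main.v *)
Require Import Defs.
From HB Require Import structures.
From mathcomp Require Import all_boot all_order all_algebra.
From mathcomp Require Import all_classical all_reals topology normedtype sequences.
From mathcomp Require Import ring zify.
Import Order.TTheory GRing.Theory Num.Theory.
Import numFieldNormedType.Exports.
Local Open Scope classical_set_scope.
Local Open Scope ring_scope.

Section Gen.
Variables (R : realType) (N : nat) (eA eB : rel 'I_N).
Local Notation P := (stepw R eA eB).
Local Notation h := (hitA R eA eB).

Lemma P_ge0 (x : config N) i j : 0 <= P x i j.
Proof. rewrite /stepw; case: ifP => // _; rewrite invr_ge0 mulr_ge0 //. Qed.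

Hypothesis Hsum : forall x, \sum_i \sum_j P x i j = 1.
Hypothesis Hprog : forall x, ~~ allA x -> (exists k, x k) ->
  exists i j, [&& x i, ~~ x j & 0 < P x i j].

Lemma h_bnd t (x : config N) : 0 <= h t x <= 1.
Proof.
elim: t x => [|t IH] x /=; first by case: ifP; rewrite ?ler01 ?lexx.
case: ifP => [_|_]; first by rewrite ler01 lexx.
 apply/andP; split.
  by apply: sumr_ge0 => i _; apply: sumr_ge0 => j _; rewrite mulr_ge0 ?P_ge0 //; case/andP: (IH (upd x j (x i))).
rewrite -(Hsum x); apply: ler_sum => i _; apply: ler_sum => j _.
by rewrite ler_piMr ?P_ge0 //; case/andP: (IH (upd x j (x i))).
Qed.

Lemma h_mono t (x : config N) : h t x <= h t.+1 x.
Proof.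
elim: t x => [|t IH] x /=.
  case: ifP => // _; apply: sumr_ge0 => i _; apply: sumr_ge0 => j _.
  by rewrite mulr_ge0 ?P_ge0 //; case: ifP.
case: ifP => // _; apply: ler_sum => i _; apply: ler_sum => j _.
by rewrite ler_wpM2l ?P_ge0.
Qed.

Lemma upd_same (x : config N) (j : 'I_N) : upd x j (x j) = x.
Proof. by apply/ffunP => k; rewrite ffunE; case: eqP => // ->. Qed.

Lemma h_B t (x : config N) : ~~ allA x -> (forall k, ~~ x k) -> h t x = 0.
Proof.
move=> nA nk; elim: t => [|t IH] /=; rewrite (negbTE nA) //.
apply: big1 => i _; apply: big1 => j _.
have -> : x i = x j by rewrite (negbTE (nk i)) (negbTE (nk j)).
by rewrite upd_same IH mulr0.
Qed.

Lemma h_cvg (x : config N) : cvgn (fun t => h t x).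
Proof.
apply: nondecreasing_is_cvgn.
  by apply/nondecreasing_seqP => t; apply: h_mono.
by exists 1 => _ [t _ <-]; case/andP: (h_bnd t x).
Qed.

Definition hl (x : config N) := limn (fun t => h t x).

Lemma hl_cvg (x : config N) : (fun t => h t x) @ \oo --> hl x.
Proof. exact: h_cvg. Qed.

Lemma hl_eq (x : config N) : ~~ allA x ->
  hl x = \sum_i \sum_j P x i j * hl (upd x j (x i)).
Proof.
move=> nA.
have H1 : (fun t => h t.+1 x) @ \oo --> hl x.
  by have := hl_cvg x; rewrite -cvg_shiftS.
have H2 : (fun t => h t.+1 x) @ \oo --> \sum_i \sum_j P x i j * hl (upd x j (x i)).
  have -> : (fun t => h t.+1 x) = (fun t => \sum_i \sum_j P x i j * h t (upd x j (x i))).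
    by apply: funext => t /=; rewrite (negbTE nA).
  apply: cvg_big => //; first exact: add_continuous.
  move=> i _; apply: cvg_big => //; first exact: add_continuous.
  move=> j _; apply: cvgMl_tmp; exact: hl_cvg.
exact: (cvg_unique _ H1 H2).
Qed.

Lemma maxprin (D : config N -> R) :
  (forall x, allA x -> D x = 0) ->
  (forall x, ~~ allA x -> (forall k, ~~ x k) -> D x = 0) ->
  (forall x, ~~ allA x -> (exists k, x k) ->
     D x = \sum_i \sum_j P x i j * D (upd x j (x i))) ->
  forall x, D x <= 0.
Proof.
move=> DA DB DH x.
have [y _ Hy] := @arg_maxP _ R _ x xpredT D isT.
set m := D _ in Hy.
suff: forall n (z : config N), #|[pred k | ~~ z k]| = n -> D z = m -> m <= 0.
  by move=> /(_ _ y erefl erefl) Hm; apply: le_trans (Hy x isT) Hm.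
elim=> [|n IH] z Hz Dz.
  have Az : allA z.
    apply/forallP => k; apply: contraT => nk.
    have : (0 < #|[pred k | ~~ z k]|)%N by apply/card_gt0P; exists k.
    by rewrite Hz.
  by rewrite -Dz DA.
have nAz : ~~ allA z.
  apply/negP => /forallP Az.
  have : #|[pred k | ~~ z k]| = 0%N by apply: eq_card0 => k; rewrite !inE /= Az.
  by rewrite Hz.
have [[k zk]|nm] := pselect (exists k, z k); last first.
  by rewrite -Dz DB // => k; apply/negP => zk; apply: nm; exists k.
have [i [j /and3P[zi nzj Pij]]] := Hprog z nAz (ex_intro _ k zk).
apply: (IH (upd z j (z i))).
  move: Hz; rewrite (cardD1 j) inE nzj add1n => -[<-].
  apply: eq_card => l; rewrite !inE ffunE; case: eqP => [->|] /=; first by rewrite zi.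
  by [].
(* weighted average argument *)
have Hle : forall i' j', P z i' j' * D (upd z j' (z i')) <= P z i' j' * m.
  by move=> i' j'; rewrite ler_wpM2l ?P_ge0 //; apply: Hy.
have E : \sum_i' \sum_j' (P z i' j' * m - P z i' j' * D (upd z j' (z i'))) = 0.
  rewrite (eq_bigr (fun i' => \sum_j' P z i' j' * m - \sum_j' P z i' j' * D (upd z j' (z i')))); last first.
    by move=> i' _; rewrite sumrB.
  rewrite sumrB -(DH z nAz (ex_intro _ k zk)).
  rewrite Dz (eq_bigr (fun i' => (\sum_j' P z i' j') * m)); last by move=> *; rewrite mulr_suml.
  by rewrite -mulr_suml Hsum mul1r subrr.
have := E; move/eqP; rewrite psumr_eq0; last first.
  by move=> i' _; apply: sumr_ge0 => j' _; rewrite subr_ge0.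
move=> /allP /(_ i (mem_index_enum _)) /implyP /(_ isT) /eqP.
move/eqP; rewrite psumr_eq0; last by move=> j' _; rewrite subr_ge0.
move=> /allP /(_ j (mem_index_enum _)) /implyP /(_ isT) /eqP.
move/eqP; rewrite subr_eq0 => /eqP E2.
apply: (mulfI (x := P z i j)); first by rewrite gt_eqF.
by rewrite E2.
Qed.

Variable phi : config N -> R.
Hypothesis phi1 : forall x, allA x -> phi x = 1.
Hypothesis phi0 : forall x, ~~ allA x -> (forall k, ~~ x k) -> phi x = 0.
Hypothesis phiH : forall x, ~~ allA x -> (exists k, x k) ->
  \sum_i \sum_j P x i j * phi (upd x j (x i)) = phi x.

Lemma gen_cvg (x : config N) : (fun t => h t x) @ \oo --> phi x.
Proof.
suff -> : phi x = hl x by apply: hl_cvg.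
have hA : forall y, allA y -> hl y = 1.
  move=> y Ay.
  have C : (fun t : nat => h t y) @ \oo --> (1 : R).
    have -> : (fun t => h t y) = (fun=> 1) by apply: funext => -[|t] /=; rewrite Ay.
    exact: cvg_cst.
  exact: (cvg_unique _ (hl_cvg y) C).
have hB : forall y, ~~ allA y -> (forall k, ~~ y k) -> hl y = 0.
  move=> y nA nk.
  have C : (fun t : nat => h t y) @ \oo --> (0 : R).
    have -> : (fun t => h t y) = (fun=> 0) by apply: funext => t; rewrite h_B.
    exact: cvg_cst.
  exact: (cvg_unique _ (hl_cvg y) C).
have key : forall s : R, s = 1 \/ s = -1 -> forall y, s * (phi y - hl y) <= 0.
  move=> s _; apply: maxprin.
  - by move=> y Ay; rewrite phi1 // hA // subrr mulr0.
  - by move=> y nA nk; rewrite phi0 // hB // subrr mulr0.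
  - move=> y nA ey; rewrite -{1}(phiH y nA ey) (hl_eq y nA) -sumrB mulr_sumr.
    apply: eq_bigr => i _; rewrite -sumrB mulr_sumr; apply: eq_bigr => j _.
    by rewrite mulrBr mulrBr mulrBr mulrCA (mulrCA s).
apply/eqP; rewrite -subr_eq0 eq_le; apply/andP; split.
  by have := key 1 (or_introl erefl) x; rewrite mul1r.
by have := key (-1) (or_intror erefl) x; rewrite mulN1r oppr_le0.
Qed.
End Gen.

Lemma class_sum (R : realType) (T : finType) (f g : T -> bool) (F : bool -> bool -> R) :
  \sum_i F (f i) (g i) = \sum_(p : bool) \sum_(s : bool)
     (#|[pred i | (f i == p) && (g i == s)]|%:R * F p s).
Proof.
transitivity (\sum_i \sum_(p:bool) \sum_(s:bool) (if (f i == p) && (g i == s) then F p s else 0)).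
  apply: eq_bigr => i _; rewrite !big_bool /=.
  by case: (f i); case: (g i); rewrite /= ?addr0 ?add0r.
rewrite exchange_big; apply: eq_bigr => p _; rewrite exchange_big; apply: eq_bigr => s _.
by rewrite -big_mkcond /= sumr_const mulr_natl.
Qed.

Lemma card_sum (T : finType) (P : pred T) : #|P| = (\sum_k (P k : nat))%N.
Proof.
rewrite -sum1_card big_mkcond /=; apply: eq_bigr => k _.
by rewrite unfold_in; case: (P k).
Qed.

Section Spec.
Variables (R : realType) (N : nat) (u v : 'I_N).
Hypotheses (HN : (3 <= N)%N) (uv : u != v).
Local Notation n := (N%:R : R).

Definition o (k : 'I_N) := (k != u) && (k != v).
Definition gr (c : bool) : rel 'I_N := if c then MN u v else @KN N.

Lemma card_no : #|[pred k | ~~ o k]| = 2%N.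
Proof.
have := cards2 u v; rewrite uv => <-; apply: eq_card => k.
by rewrite !inE /o negb_and !negbK.
Qed.

Lemma card_o : #|[pred k | o k]| = (N - 2)%N.
Proof.
have := cardC [pred k | o k].
have -> : #|[predC [pred k | o k]]| = 2%N by rewrite -card_no; apply: eq_card.
move=> H; have E : (#|[pred k | o k]| + 2 = N)%N by rewrite H; exact: card_ord.
lia.
Qed.

Lemma MN_in i j : ~~ o i -> MN u v i j = o j.
Proof.
have vu : v != u by rewrite eq_sym.
rewrite /o /MN negb_and !negbK => /orP[] /eqP ->.
  by rewrite eqxx (negbTE uv) (eq_sym u j) /=; case: (j == u); case: (j == v).
by rewrite eqxx (negbTE vu) (eq_sym v j) /=; case: (j == u); case: (j == v).
Qed.

Lemma MN_out i j : o i -> MN u v i j = (i != j).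
Proof.
by rewrite /o /MN => /andP[/negbTE -> /negbTE ->]; rewrite /= andbT.
Qed.

Lemma MN_adj i j : i != j -> MN u v i j = o i || o j.
Proof.
move=> ij; case oi: (o i); first by rewrite MN_out.
by rewrite MN_in ?oi.
Qed.

Lemma n_gt2 : 2 < n.
Proof. by rewrite ltr_nat. Qed.

Lemma deg_KN i : (deg (@KN N) i)%:R = n - 1 :> R.
Proof.
rewrite /deg (eq_card (B := predC1 i)); last by move=> j; rewrite !inE /KN eq_sym.
rewrite cardC1 card_ord -subn1 natrB //; by apply: leq_trans HN.
Qed.

Lemma deg_MN i : (deg (MN u v) i)%:R = (if o i then n - 1 else n - 2) :> R.
Proof.
case oi: (o i).
  rewrite /deg (eq_card (B := predC1 i)); last by move=> j; rewrite !inE MN_out // eq_sym.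
  rewrite cardC1 card_ord -subn1 natrB //; by apply: leq_trans HN.
rewrite /deg (eq_card (B := [pred k | o k])); last by move=> j; rewrite !inE MN_in ?oi.
rewrite card_o natrB //; by apply: leq_trans HN.
Qed.

Lemma deg_gr c i : (deg (gr c) i)%:R = (if c && ~~ o i then n - 2 else n - 1) :> R.
Proof. by case: c => /=; rewrite ?deg_KN // deg_MN; case: (o i). Qed.

Lemma deg_gr_gt0 c i : 0 < (deg (gr c) i)%:R :> R.
Proof.
rewrite deg_gr; have := n_gt2; case: ifP => _ h; rewrite subr_gt0.
  by [].
by apply: lt_trans h; rewrite ltr1n.
Qed.

Definition W (cA cB p s t : bool) : R :=
  if (if p then cA else cB) then
    (if s || t then (n * (if s then n - 1 else n - 2))^-1 else 0)
  else (n * (n - 1))^-1.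

Lemma gr_sel (cA cB b : bool) : (if b then gr cA else gr cB) = gr (if b then cA else cB).
Proof. by case: b. Qed.

Lemma stepw_neq cA cB (x : config N) i j : x i != x j ->
  stepw R (gr cA) (gr cB) x i j = W cA cB (x i) (o i) (o j).
Proof.
move=> xij; have ij : i != j by apply: contraNneq xij => ->.
rewrite /stepw /W gr_sel deg_gr.
case: (if x i then cA else cB) => /=; last by rewrite /KN ij.
by rewrite MN_adj //; case: (o i); case: (o j).
Qed.

Lemma sum_stepw cA cB (x : config N) : \sum_i \sum_j stepw R (gr cA) (gr cB) x i j = 1.
Proof.
have H : forall i, \sum_j stepw R (gr cA) (gr cB) x i j = n^-1.
  move=> i; rewrite /stepw gr_sel; set c := (if x i then cA else cB).
  rewrite -big_mkcond /= sumr_const -[LHS]mulr_natr.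
  have -> : #|[pred j | gr c i j]| = deg (gr c) i by [].
  rewrite invfM -mulrA mulVf ?mulr1 //; exact: lt0r_neq0 (deg_gr_gt0 c i).
rewrite (eq_bigr _ (fun i _ => H i)) sumr_const card_ord -[LHS]mulr_natr mulVf //.
by rewrite pnatr_eq0 -lt0n; apply: leq_trans HN.
Qed.

Lemma W_gt0 cA cB p s t : (if p then cA else cB) ==> (s || t) -> 0 < W cA cB p s t.
Proof.
have h2 := n_gt2.
have n0 : 0 < n by apply: lt_trans h2.
have n1 : 0 < n - 1 by rewrite subr_gt0; apply: lt_trans h2; rewrite ltr1n.
have n2 : 0 < n - 2 by rewrite subr_gt0.
rewrite /W; case: (if p then cA else cB) => /= H; last by rewrite invr_gt0 mulr_gt0.
by rewrite H invr_gt0 mulr_gt0 //; clear H; case: s.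
Qed.

Lemma exists_o : exists w, o w.
Proof.
have : (0 < #|[pred k | o k]|)%N by rewrite card_o; rewrite subn_gt0.
by move/card_gt0P => [w]; exists w.
Qed.

Lemma prog cA cB (x : config N) : ~~ allA x -> (exists k, x k) ->
  exists i j, [&& x i, ~~ x j & 0 < stepw R (gr cA) (gr cB) x i j].
Proof.
move=> /forallPn [j nj] [i xi].
have good : forall i' j', x i' -> ~~ x j' -> o i' || o j' ->
    exists i j, [&& x i, ~~ x j & 0 < stepw R (gr cA) (gr cB) x i j].
  move=> i' j' xi' nj' oo; exists i', j'; rewrite xi' nj' /=.
  rewrite stepw_neq; last by rewrite xi' (negbTE nj').
  by apply: W_gt0; rewrite xi' oo implybT.
case oo: (o i || o j); first exact: good oo.
have [w ow] := exists_o.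
case xw: (x w); first by apply: (good w j) => //; rewrite ow.
by apply: (good i w) => //; rewrite ?xw // ow orbT.
Qed.

Definition cntq (x : config N) (q : pred 'I_N) := #|[pred k | x k && q k]|.

Lemma cnt_out_q (x : config N) : cnt_out u v x = cntq x o.
Proof. by apply: eq_card => k; rewrite !inE /o andbA. Qed.

Lemma cnt_in_q (x : config N) : cnt_in u v x = cntq x (fun k => ~~ o k).
Proof. by apply: eq_card => k; rewrite !inE /o negb_and !negbK. Qed.

Lemma cntq_upd (x : config N) j c q : (cntq (upd x j c) q)%:R =
  (cntq x q)%:R + ((c && q j) : nat)%:R - ((x j && q j) : nat)%:R :> R.
Proof.
rewrite /cntq !card_sum (bigD1 j) //= [in RHS](bigD1 j) //= ffunE eqxx.
have -> : (\sum_(k | k != j) ((upd x j c k && q k) : nat))%N =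
          (\sum_(k | k != j) ((x k && q k) : nat))%N.
  by apply: eq_bigr => k kj; rewrite ffunE (negbTE kj).
by rewrite !natrD; ring.
Qed.

Lemma cntq_compl (x : config N) q : (cntq x q + #|[pred k | ~~ x k && q k]|)%N = #|[pred k | q k]|.
Proof.
rewrite /cntq !card_sum -big_split /=; apply: eq_bigr => k _.
by case: (x k); case: (q k).
Qed.

Definition bR (t : bool) : R := (t : nat)%:R.

Definition Phi (F : R -> R -> R) (x : config N) :=
  F (cnt_out u v x)%:R (cnt_in u v x)%:R.

Definition G (F : R -> R -> R) (a b : R) cA cB (p s q t : bool) : R :=
  if p == q then 0 else W cA cB p s t *
    (F (if p then a + bR t else a - bR t) (if p then b + bR (~~ t) else b - bR (~~ t)) - F a b).

Lemma term F cA cB (x : config N) i j :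
  stepw R (gr cA) (gr cB) x i j * (Phi F (upd x j (x i)) - Phi F x) =
  G F (cnt_out u v x)%:R (cnt_in u v x)%:R cA cB (x i) (o i) (x j) (o j).
Proof.
rewrite /G; case: eqP => [e|/eqP ne].
  by rewrite e upd_same subrr mulr0.
rewrite stepw_neq //; congr (_ * (_ - _)).
rewrite /Phi !cnt_out_q !cnt_in_q !cntq_upd /bR.
move: ne; case: (x i); case: (x j) => //= _; rewrite ?subr0 ?add0r //.
by rewrite !addr0.
Qed.

Definition C (x : config N) (p s : bool) : R := #|[pred k | (x k == p) && (o k == s)]|%:R.

Lemma harm_gen F cA cB (x : config N) :
  \sum_i \sum_j stepw R (gr cA) (gr cB) x i j * Phi F (upd x j (x i)) - Phi F x =
  \sum_(q : bool) \sum_(t : bool) \sum_(p : bool) \sum_(s : bool)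
     C x p s * (C x q t * G F (cnt_out u v x)%:R (cnt_in u v x)%:R cA cB p s q t).
Proof.
set a := (cnt_out u v x)%:R; set b := (cnt_in u v x)%:R.
rewrite -[X in _ - X]mul1r -(sum_stepw cA cB x) !mulr_suml -sumrB.
transitivity (\sum_i \sum_j G F a b cA cB (x i) (o i) (x j) (o j)).
  apply: eq_bigr => i _; rewrite mulr_suml -sumrB; apply: eq_bigr => j _.
  by rewrite -mulrBr term.
under eq_bigr => i _ do rewrite (@class_sum R _ x o (G F a b cA cB (x i) (o i))).
rewrite exchange_big; apply: eq_bigr => q _.
rewrite exchange_big; apply: eq_bigr => t _.
by rewrite (@class_sum R _ x o (fun p s => C x q t * G F a b cA cB p s q t)).
Qed.

Lemma C_tt (x : config N) : C x true true = (cnt_out u v x)%:R.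
Proof. by rewrite /C cnt_out_q; congr (_%:R); apply: eq_card => k; rewrite !inE !eqb_id. Qed.

Lemma C_tf (x : config N) : C x true false = (cnt_in u v x)%:R.
Proof. by rewrite /C cnt_in_q; congr (_%:R); apply: eq_card => k; rewrite !inE eqb_id eqbF_neg. Qed.

Lemma N2 : (N - 2)%:R = n - 2 :> R.
Proof. by rewrite natrB //; apply: leq_trans HN. Qed.

Lemma C_ft (x : config N) : C x false true = n - 2 - (cnt_out u v x)%:R.
Proof.
have := cntq_compl x o; rewrite card_o -cnt_out_q => /(congr1 (fun m => m%:R : R)).
rewrite natrD N2 => <-; rewrite addrAC subrr add0r /C; congr (_%:R).
by apply: eq_card => k; rewrite !inE eqb_id eqbF_neg.
Qed.

Lemma C_ff (x : config N) : C x false false = 2 - (cnt_in u v x)%:R.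
Proof.
have := cntq_compl x (fun k => ~~ o k); rewrite card_no -cnt_in_q => /(congr1 (fun m => m%:R : R)).
rewrite natrD => <-; rewrite addrAC subrr add0r /C; congr (_%:R).
by apply: eq_card => k; rewrite !inE !eqbF_neg.
Qed.

Lemma cnt_in_le (x : config N) : (cnt_in u v x <= 2)%N.
Proof. by rewrite -card_no -(cntq_compl x (fun k => ~~ o k)) cnt_in_q leq_addr. Qed.

Definition F1 (a b : R) := ((a + b) * (n - 2) + 2^-1 * b * (b - 1)) / (n - 1) ^+ 2.
Definition F2 (a b : R) := ((a + b) * (n - 2) + 2^-1 * b * (3 - b)) / (n - 1) ^+ 2.

Lemma nz : [/\ n != 0, n - 1 != 0 & n - 2 != 0].
Proof.
have h2 := n_gt2.
split; rewrite gt_eqF //; first by apply: lt_trans h2.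
  by rewrite subr_gt0; apply: lt_trans h2; rewrite ltr1n.
by rewrite subr_gt0.
Qed.

Lemma harm1 (x : config N) : \sum_i \sum_j stepw R (gr true) (gr false) x i j * Phi F1 (upd x j (x i)) = Phi F1 x.
Proof.
apply/eqP; rewrite -subr_eq0 harm_gen !big_bool /= /G /W /bR /=.
rewrite !C_tt !C_tf !C_ft !C_ff /F1 /=.
have := cnt_in_le x; move: (cnt_in u v x) (cnt_out u v x) => b a.
case: nz => n0 n1 n2.
case: b => [|[|[|b]]] // _; apply/eqP; field; rewrite ?n0 ?n1 ?n2 //.
Qed.

Lemma harm2 (x : config N) : \sum_i \sum_j stepw R (gr false) (gr true) x i j * Phi F2 (upd x j (x i)) = Phi F2 x.
Proof.
apply/eqP; rewrite -subr_eq0 harm_gen !big_bool /= /G /W /bR /=.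
rewrite !C_tt !C_tf !C_ft !C_ff /F2 /=.
have := cnt_in_le x; move: (cnt_in u v x) (cnt_out u v x) => b a.
case: nz => n0 n1 n2.
case: b => [|[|[|b]]] // _; apply/eqP; field; rewrite ?n0 ?n1 ?n2 //.
Qed.

Lemma cnt_allA (x : config N) : allA x -> cnt_out u v x = (N - 2)%N /\ cnt_in u v x = 2%N.
Proof.
move=> /forallP Ax.
have z : forall q, #|[pred k | ~~ x k && q k]| = 0%N.
  by move=> q; apply: eq_card0 => k; rewrite !inE Ax.
split.
  by rewrite cnt_out_q -card_o -(cntq_compl x o) z addn0.
by rewrite cnt_in_q -card_no -(cntq_compl x (fun k => ~~ o k)) z addn0.
Qed.

Lemma cnt_B (x : config N) : (forall k, ~~ x k) -> cnt_out u v x = 0%N /\ cnt_in u v x = 0%N.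
Proof.
move=> Bx; split; apply: eq_card0 => k; rewrite !inE (negbTE (Bx k)) //.
Qed.

Lemma Phi1_A (x : config N) : allA x -> Phi F1 x = 1.
Proof.
move=> /cnt_allA [ha hb]; rewrite /Phi ha hb N2 /F1.
case: nz => n0 n1 n2; apply/eqP; rewrite -subr_eq0; apply/eqP; field; rewrite ?n1 //.
Qed.

Lemma Phi2_A (x : config N) : allA x -> Phi F2 x = 1.
Proof.
move=> /cnt_allA [ha hb]; rewrite /Phi ha hb N2 /F2.
case: nz => n0 n1 n2; apply/eqP; rewrite -subr_eq0; apply/eqP; field; rewrite ?n1 //.
Qed.

Lemma Phi1_B (x : config N) : (forall k, ~~ x k) -> Phi F1 x = 0.
Proof. by move=> /cnt_B [ha hb]; rewrite /Phi ha hb /F1 !addr0 !mulr0 !mul0r addr0 mul0r. Qed.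

Lemma Phi2_B (x : config N) : (forall k, ~~ x k) -> Phi F2 x = 0.
Proof. by move=> /cnt_B [ha hb]; rewrite /Phi ha hb /F2 !addr0 !mulr0 !mul0r addr0 mul0r. Qed.
End Spec.

Theorem mainTheorem2 (R : realType) (N : nat) (u v : 'I_N) (x : config N) :
  (3 <= N)%N -> u != v ->
  let a : R := (cnt_out u v x)%:R in
  let b : R := (cnt_in u v x)%:R in
  ((fun t => hitA R (MN u v) (@KN N) t x) @ \oo -->
     ((a + b) * (N%:R - 2) + 2^-1 * b * (b - 1)) / (N%:R - 1) ^+ 2)
  /\
  ((fun t => hitA R (@KN N) (MN u v) t x) @ \oo -->
     ((a + b) * (N%:R - 2) + 2^-1 * b * (3 - b)) / (N%:R - 1) ^+ 2).
Proof.
move=> HN uv a b; split.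
  apply: (@gen_cvg R N (gr N u v true) (gr N u v false) (sum_stepw R N u v HN uv true false)
            (prog R N u v HN uv true false) (Phi R N u v (F1 R N))).
  - by move=> y Ay; exact: (Phi1_A R N u v HN uv y Ay).
  - by move=> y _; exact: (Phi1_B R N u v y).
  - by move=> y _ _; exact: (harm1 R N u v HN uv y).
apply: (@gen_cvg R N (gr N u v false) (gr N u v true) (sum_stepw R N u v HN uv false true)
          (prog R N u v HN uv false true) (Phi R N u v (F2 R N))).
- by move=> y; exact: (Phi2_A R N u v HN uv y).
- by move=> y _; exact: (Phi2_B R N u v y).
- by move=> y _ _; exact: (harm2 R N u v HN uv y).
Qed.
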